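(* Let $p(\cdot\mid z)$, $z\in\mathcal{Z}^{\times}$, be an additive energy distribution (AED) family with energy map $E:\mathbb{R}^n\to\mathbb{R}^{md}$, i.e. $p(x\mid z)=\frac{1}{\mathbb{Z}(z)}\exp(-\langle\sigma(z),E(x)\rangle)$ with $\mathbb{Z}(z)=\int\exp(-\langle\sigma(z),E(x)\rangle)\,dx<\infty$. Let $\hat E:\mathbb{R}^n\to\mathbb{R}^{md}$ be another map with $\hat{\mathbb{Z}}(z)=\int\exp(-\langle\sigma(z),\hat E(x)\rangle)\,dx<\infty$ for all $z\in\mathcal{Z}^{\times}$, and define the learned AED $\hat p(x\mid z)=\frac{1}{\hat{\mathbb{Z}}(z)}\exp(-\langle\sigma(z),\hat E(x)\rangle)$ for all $z\in\mathcal{Z}^{\times}$. If $\hat p(\cdot\mid z)=p(\cdot\mid z)$ for all $z\in\mathcal{Z}^{\mathsf{train}}$, then $\hat p(\cdot\mid z')=p(\cdot\mid z')$ for all $z'\in\mathsf{DAff}(\mathcal{Z}^{\mathsf{train}})$.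
   Context: An attribute vector is $z=(z_1,\dots,z_m)$ with each $z_i\in\{1,\dots,d\}$; $\mathcal{Z}=\{1,\dots,d\}^m$. For $z\in\mathcal{Z}$, $\sigma(z)\in\{0,1\}^{md}$ denotes the concatenation of the one-hot encodings of $z_1,\dots,z_m$. For a finite set $\mathcal{A}=\{z^{(1)},\dots,z^{(k)}\}\subseteq\mathcal{Z}$, its discrete affine hull is $\mathsf{DAff}(\mathcal{A})=\{z\in\mathcal{Z}:\exists\alpha\in\mathbb{R}^k,\ \sum_i\alpha_i=1,\ \sigma(z)=\sum_{i=1}^k\alpha_i\sigma(z^{(i)})\}$. There is a training distribution $p(x,z)=p(z)p(x\mid z)$ on $\mathbb{R}^n\times\mathcal{Z}$; $\mathcal{Z}^{\mathsf{train}}$ is the support of $p(z)$, $\mathcal{Z}_i^{\mathsf{train}}$ is the set of values taken by the $i$-th coordinate on $\mathcal{Z}^{\mathsf{train}}$, and $\mathcal{Z}^{\times}=\mathcal{Z}_1^{\mathsf{train}}\times\cdots\times\mathcal{Z}_m^{\mathsf{train}}$. The densities $p(\cdot\mid z)$ are assumed to have support $\mathbb{R}^n$ for every $z\in\mathcal{Z}^{\times}$. *)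

(* Defs.v *)
From HB Require Import structures.
From mathcomp Require Import all_boot all_order all_algebra.
From mathcomp Require Import all_classical all_reals all_analysis.
Set Implicit Arguments. Unset Strict Implicit. Unset Printing Implicit Defensive.
Import Order.TTheory GRing.Theory Num.Theory.
Local Open Scope ring_scope.
Local Open Scope classical_set_scope.

(* - The attribute values {1,...,d} are represented by 'I_d = {0,...,d-1}.
   - An attribute vector z in {1..d}^m is an element of {ffun 'I_m -> 'I_d}.
   - A vector of R^{md} is indexed by pairs (i,k) : 'I_m * 'I_d, i.e. it is a
     function 'I_m -> 'I_d -> R (block i = one-hot slot of coordinate i).
   - R^n is n.-tuple R with its canonical (product/Borel) sigma-algebra. *)

Notation attr m d := {ffun 'I_m -> 'I_d}.

Definition onehot {R : realType} {m d : nat} (z : attr m d) : 'I_m -> 'I_d -> R :=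
  fun i k => (z i == k)%:R.

Definition ip {R : realType} {m d : nat} (u v : 'I_m -> 'I_d -> R) : R :=
  \sum_(i < m) \sum_(k < d) u i k * v i k.

Definition Zcross {m d : nat} (Ztrain : {set attr m d}) : {set attr m d} :=
  [set z : attr m d | [forall i : 'I_m, [exists w : attr m d, (w \in Ztrain) && (w i == z i)]]].

Definition DAff {R : realType} {m d : nat} (A : {set attr m d}) : set (attr m d) :=
  [set z | exists alpha : attr m d -> R,
      \sum_(w in A) alpha w = 1 /\
      forall i k, onehot z i k = \sum_(w in A) alpha w * onehot w i k].

Definition box {R : realType} {n : nat} (a b : n.-tuple R) : set (n.-tuple R) :=
  [set x | forall i : 'I_n, tnth a i <= tnth x i < tnth b i].

Definition is_lebesgue {R : realType} {n : nat}
    (mu : {measure set (n.-tuple R) -> \bar R}) : Prop :=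
  forall a b : n.-tuple R, (forall i, tnth a i <= tnth b i) ->
    mu (box a b) = (\prod_(i < n) (tnth b i - tnth a i))%:E.

Definition partZ {R : realType} {n m d : nat}
    (mu : {measure set (n.-tuple R) -> \bar R})
    (E : n.-tuple R -> 'I_m -> 'I_d -> R) (z : attr m d) : \bar R :=
  (\int[mu]_x (expR (- ip (onehot z) (E x)))%:E)%E.

Definition aed {R : realType} {n m d : nat}
    (mu : {measure set (n.-tuple R) -> \bar R})
    (E : n.-tuple R -> 'I_m -> 'I_d -> R) (z : attr m d) (x : n.-tuple R) : R :=
  (fine (partZ mu E z))^-1 * expR (- ip (onehot z) (E x)).

(* Main.v *)
Require Import Defs.
From HB Require Import structures.
From mathcomp Require Import all_boot all_order all_algebra.
From mathcomp Require Import all_classical all_reals all_analysis.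
From mathcomp Require Import measurable_realfun.
From mathcomp Require Import ring.
Import Order.TTheory GRing.Theory Num.Theory.
Local Open Scope ring_scope.
Local Open Scope classical_set_scope.

Lemma ip_measurable (R : realType) (n m d : nat) (z : attr m d)
   (F : n.-tuple R -> 'I_m -> 'I_d -> R)
   (mF : forall i k, measurable_fun setT (fun x => F x i k)) :
  measurable_fun setT (fun x => (expR (- ip (onehot z) (F x)))%:E).
Proof.
apply/measurable_EFinP; apply: measurableT_comp; first exact: measurable_expR.
apply: measurable_funN; rewrite /ip.
apply: measurable_sum => i; apply: measurable_sum => k.
apply: measurable_funM; [exact: measurable_cst | exact: mF].
Qed.

Lemma partZ_gt0 (R : realType) (n m d : nat)
    (mu : {measure set (n.-tuple R) -> \bar R}) (Hmu : is_lebesgue mu)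
   (F : n.-tuple R -> 'I_m -> 'I_d -> R)
   (mF : forall i k, measurable_fun setT (fun x => F x i k)) (z : attr m d) :
  (0 < partZ mu F z)%E.
Proof.
have mf := @ip_measurable R n m d z F mF.
rewrite lt0e; apply/andP; split; last first.
  by apply: integral_ge0 => x _; rewrite lee_fin expR_ge0.
apply/eqP => H0.
have : (\int[mu]_x `|(expR (- ip (onehot z) (F x)))%:E|)%E = 0%E.
  by rewrite -H0 /partZ; apply: eq_integral => x _; rewrite gee0_abs // lee_fin expR_ge0.
move/(ae_eq_integral_abs mu measurableT mf) => [N [mN muN sub]].
have sT : [set: n.-tuple R] `<=` N.
  move=> x _; apply: sub => /= /(_ I) /eqP.
  by rewrite eqe gt_eqF // expR_gt0.
pose a : n.-tuple R := [tuple (0:R) | i < n].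
pose b : n.-tuple R := [tuple (1:R) | i < n].
have hab : forall i, tnth a i <= tnth b i by move=> i; rewrite !tnth_mktuple ler01.
have := Hmu a b hab.
rewrite big1; last by move=> i _; rewrite !tnth_mktuple subr0.
move=> hbox.
have mbox : measurable (box a b).
  have -> : box a b = \bigcap_(i in [set: 'I_n])
      (setT `&` ((fun x : n.-tuple R => tnth x i) @^-1` `[tnth a i, tnth b i[)).
    apply/seteqP; split => x /=.
      by move=> hx i _; split => //=; rewrite in_itv /=; exact: hx.
    by move=> hx i; have [_ /=] := hx i I; rewrite in_itv.
  apply: fin_bigcap_measurable; first exact: finite_finset.
  move=> i _; apply: measurable_tnth => //; exact: measurable_itv.
have : mu (box a b) = 0%E.
  apply: (subset_measure0 _ _ _ muN) => //; exact: (subset_trans (@subsetT _ (box a b)) sT).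
by rewrite hbox => /eqP; rewrite eqe oner_eq0.
Qed.

Lemma fine_scale (R : realType) (k : R) (I : \bar R) : 0 < k ->
  fine (k%:E * I)%E = k * fine I.
Proof.
move=> k0; case: I => [r||] /=; first by [].
  by rewrite gt0_muley ?lte_fin // mulr0.
by rewrite gt0_muleNy ?lte_fin // mulr0.
Qed.

Theorem theorem1 (R : realType) (n m d : nat)
    (mu : {measure set (n.-tuple R) -> \bar R}) (Hmu : is_lebesgue mu)
    (Ztrain : {set attr m d})
    (E Ehat : n.-tuple R -> 'I_m -> 'I_d -> R)
    (mE : forall i k, measurable_fun setT (fun x => E x i k))
    (mEhat : forall i k, measurable_fun setT (fun x => Ehat x i k))
    (finZ : forall z, z \in Zcross Ztrain -> (partZ mu E z < +oo)%E)
    (finZhat : forall z, z \in Zcross Ztrain -> (partZ mu Ehat z < +oo)%E)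
    (Htrain : forall z, z \in Ztrain -> aed mu Ehat z = aed mu E z) :
  forall z', DAff (R := R) Ztrain z' -> aed mu Ehat z' = aed mu E z'.
Proof.
move=> z' [alpha [Hsum Hoh]].
have trainZ w : w \in Ztrain -> w \in Zcross Ztrain.
  move=> wT; rewrite inE; apply/forallP => i; apply/existsP; exists w.
  by rewrite wT eqxx.
have fpos (F : n.-tuple R -> 'I_m -> 'I_d -> R) (w : attr m d) : (forall i k, measurable_fun setT (fun x => F x i k)) ->
    (partZ mu F w < +oo)%E -> 0 < fine (partZ mu F w).
  by move=> mF fin; apply: fine_gt0; rewrite (@partZ_gt0 R n m d mu Hmu F mF w) fin.
pose c w := ln (fine (partZ mu Ehat w) / fine (partZ mu E w)).
have Hc w x : w \in Ztrain -> ip (onehot w) (Ehat x) = ip (onehot w) (E x) - c w.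
  move=> wT; have := congr1 (fun f => f x) (Htrain w wT); rewrite /aed /c.
  have hZ := fpos E w mE (finZ w (trainZ w wT)).
  have hZh := fpos Ehat w mEhat (finZhat w (trainZ w wT)).
  set a := ip _ (Ehat x); set b := ip _ (E x).
  set Zh := fine _; set Z := fine _ => H.
  have : expR (- a) = expR (ln (Zh / Z) - b).
    rewrite expRD lnK; last by rewrite posrE divr_gt0.
    apply: (mulfI (invr_neq0 (lt0r_neq0 hZh))); rewrite H.
    rewrite -/Zh; field.
    by rewrite !lt0r_neq0.
  move/expR_inj => h; rewrite -[a]opprK h; ring.
have ipL v : ip (onehot z') v = \sum_(w in Ztrain) alpha w * ip (onehot w) v.
  rewrite /ip.
  have -> : \sum_(i<m) \sum_(k<d) onehot z' i k * v i k =
      \sum_(i<m) \sum_(w in Ztrain) \sum_(k<d) alpha w * onehot w i k * v i k.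
    apply: eq_bigr => i _; rewrite [in RHS]exchange_big /=.
    by apply: eq_bigr => k _; rewrite Hoh mulr_suml.
  rewrite exchange_big /=; apply: eq_bigr => w _; rewrite mulr_sumr.
  apply: eq_bigr => i _; rewrite mulr_sumr; apply: eq_bigr => k _.
  by rewrite mulrA.
pose C := \sum_(w in Ztrain) alpha w * c w.
have key x : expR (- ip (onehot z') (Ehat x)) = expR C * expR (- ip (onehot z') (E x)).
  rewrite !ipL.
  under eq_bigr => w wT do rewrite (Hc w x wT) mulrBr.
  by rewrite sumrB opprB expRD.
have hZ : partZ mu Ehat z' = ((expR C)%:E * partZ mu E z')%E.
  rewrite /partZ -ge0_integralZl_EFin //.
    by apply: eq_integral => x _; rewrite key EFinM.
  exact: ip_measurable.
apply/funext => x; rewrite /aed hZ fine_scale ?expR_gt0 // key.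
rewrite invfM mulrACA mulVf ?mul1r //; exact: lt0r_neq0 (expR_gt0 _).
Qed.
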